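(* Pruning is correct, i.e., (1) If ⟨E, C^WW, C^WR⟩ ↪* ⟨E_p, C^WW_p, C^WR_p⟩, then G is SER-acyclic if and only if G_p is SER-acyclic. (2) If ⟨E, C^WW, C^WR⟩ ↪* S_#, then G is not SER-acyclic.
   Context: A history H = (T, SO) consists of a set T of committed transactions (key-value reads R(x,v) and writes W(x,v)) and a session order SO. WriteTx_x denotes the set of transactions writing key x. The hyper-polygraph of H is G = (V, E, (C^WW, C^WR)) where V is the set of transactions, E is the set of known edges (labelled SO, WR, WW, RW with a key; initially the SO edges and the WR edges whose read value has a unique writer), C^WW = {{T →WW(x) S, S →WW(x) T} | T, S ∈ WriteTx_x, T ≠ S}, and C^WR = {{T_i →WR(x) S | T_i writes v to x} | S reads v from x}. A graph G' = (V, E') is compatible with G if E' ⊇ E, E' contains exactly one edge from each constraint in C^WW and in C^WR, and E' is closed under the derivation rule: T' →WR(x) T and T' →WW(x) S in E' imply T →RW(x) S in E'. G is called SER-acyclic if some compatible graph is acyclic (equivalently, for the hyper-polygraph of H, H satisfies Serializability, given H satisfies internal consistency). Pruning is modelled as a transition system ↪ on states ⟨E, C^WW, C^WR⟩, starting from the components of G; a state ⟨E_p, C^WW_p, C^WR_p⟩ corresponds to the hyper-polygraph G_p = (V, E_p, (C^WW_p, C^WR_p)). The rules, applied nondeterministically until none applies, are: - No-Choice: if ∅ ∈ C^WW ∪ C^WR, move to the terminal violation state S_#. - Cycle: if E is cyclic, move to S_#. - WW-Elim: for cons ∈ C^WW containing T →WW(x) T', if E ∪ ({T →WW(x) T'}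 ∪ {S →RW(x) T' | T →WR(x) S ∈ E}) is cyclic, replace cons by cons \ {T →WW(x) T'}. - WR-Elim: for cons ∈ C^WR containing T →WR(x) S, if E ∪ ({T →WR(x) S} ∪ {S →RW(x) T' | T →WW(x) T' ∈ E}) is cyclic, replace cons by cons \ {T →WR(x) S}. - WW-Intro: if a singleton {T →WW(x) T'} ∈ C^WW, remove it from C^WW and add {T →WW(x) T'} ∪ {S →RW(x) T' | T →WR(x) S ∈ E} to E. - WR-Intro: if a singleton {T →WR(x) S} ∈ C^WR, remove it from C^WR and add {T →WR(x) S} ∪ {S →RW(x) T' | T →WW(x) T' ∈ E} to E. ↪* denotes a finite sequence of such transitions. *)

(* Defs.v *)
From Stdlib Require Import List Relations.
From mathcomp Require Import all_boot.
Import ListNotations.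

Set Implicit Arguments.
Unset Strict Implicit.

Section Hyper.
Variables (V : finType) (K Val : Type).

Inductive op := Rd (x : K) (v : Val) | Wr (x : K) (v : Val).

(* A history: every (committed) transaction T : V has its sequence of
   operations, and SO is the session order. *)
Record history := History {
  ops : V -> list op;
  SO  : V -> V -> Prop }.

Definition writes (H : history) (T : V) (x : K) (v : Val) : Prop :=
  exists l1 l2, ops H T = l1 ++ Wr x v :: l2 /\ forall w, ~ In (Wr x w) l2.

Definition writeTx (H : history) (x : K) (T : V) : Prop :=
  exists v, In (Wr x v) (ops H T).

Definition reads (H : history) (U : V) (x : K) (v : Val) : Prop :=
  exists l1 l2, ops H U = l1 ++ Rd x v :: l2 /\ forall w, ~ In (Wr x w) l1.

Inductive edge :=
| SOe (T U : V)
| WRe (x : K) (T U : V)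
| WWe (x : K) (T U : V)
| RWe (x : K) (T U : V).

Definition src (e : edge) : V :=
  match e with SOe T _ | WRe _ T _ | WWe _ T _ | RWe _ T _ => T end.
Definition dst (e : edge) : V :=
  match e with SOe _ U | WRe _ _ U | WWe _ _ U | RWe _ _ U => U end.

Definition eset := edge -> Prop.
Definition cset := eset -> Prop.

Definition esingle (e : edge) : eset := fun f => f = e.
Definition eempty : eset := fun _ => False.
Definition eunion (A B : eset) : eset := fun f => A f \/ B f.
Definition eminus (A : eset) (e : edge) : eset := fun f => A f /\ f <> e.
Definition esubset (A B : eset) : Prop := forall f, A f -> B f.

Definition creplace (C : cset) (c c' : eset) : cset :=
  fun d => (C d /\ d <> c) \/ d = c'.
Definition cremove (C : cset) (c : eset) : cset := fun d => C d /\ d <> c.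

Definition cyclic (E : eset) : Prop :=
  exists t, clos_trans V (fun a b => exists e, E e /\ src e = a /\ dst e = b) t t.

Definition init_E (H : history) : eset := fun e =>
  (exists T U, SO H T U /\ e = SOe T U) \/
  (exists x T U v, reads H U x v /\ writes H T x v /\
     (forall T', writes H T' x v -> T' = T) /\ e = WRe x T U).

Definition init_CWW (H : history) : cset := fun c =>
  exists x T U, writeTx H x T /\ writeTx H x U /\ T <> U /\
    c = (fun e => e = WWe x T U \/ e = WWe x U T).

Definition init_CWR (H : history) : cset := fun c =>
  exists U x v, reads H U x v /\
    c = (fun e => exists Ti, writes H Ti x v /\ e = WRe x Ti U).

Definition compatible (E : eset) (CWW CWR : cset) (E' : eset) : Prop :=
  esubset E E' /\
  (forall c, CWW c -> exists! e, c e /\ E' e) /\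
  (forall c, CWR c -> exists! e, c e /\ E' e) /\
  (forall x T' T U, E' (WRe x T' T) -> E' (WWe x T' U) -> E' (RWe x T U)).

Definition SER_acyclic (E : eset) (CWW CWR : cset) : Prop :=
  exists E', compatible E CWW CWR E' /\ ~ cyclic E'.

Inductive state := St (E : eset) (CWW CWR : cset) | Sviol.

Definition derivWW (E : eset) (x : K) (T T' : V) : eset :=
  fun f => exists U, E (WRe x T U) /\ f = RWe x U T'.
Definition derivWR (E : eset) (x : K) (T U : V) : eset :=
  fun f => exists T', E (WWe x T T') /\ f = RWe x U T'.

Inductive step : state -> state -> Prop :=
| NoChoice E CWW CWR :
    CWW eempty \/ CWR eempty -> step (St E CWW CWR) Sviol
| CycleR E CWW CWR :
    cyclic E -> step (St E CWW CWR) Sviol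
| WWElim E CWW CWR cons x T T' :
    CWW cons -> cons (WWe x T T') ->
    cyclic (eunion E (eunion (esingle (WWe x T T')) (derivWW E x T T'))) ->
    step (St E CWW CWR)
         (St E (creplace CWW cons (eminus cons (WWe x T T'))) CWR)
| WRElim E CWW CWR cons x T U :
    CWR cons -> cons (WRe x T U) ->
    cyclic (eunion E (eunion (esingle (WRe x T U)) (derivWR E x T U))) ->
    step (St E CWW CWR)
         (St E CWW (creplace CWR cons (eminus cons (WRe x T U))))
| WWIntro E CWW CWR x T T' :
    CWW (esingle (WWe x T T')) ->
    step (St E CWW CWR)
         (St (eunion E (eunion (esingle (WWe x T T')) (derivWW E x T T')))
             (cremove CWW (esingle (WWe x T T'))) CWR)
| WRIntro E CWW CWR x T U :
    CWR (esingle (WRe x T U)) ->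
    step (St E CWW CWR)
         (St (eunion E (eunion (esingle (WRe x T U)) (derivWR E x T U)))
             CWW (cremove CWR (esingle (WRe x T U)))).

Definition steps : state -> state -> Prop := clos_refl_trans state step.

End Hyper.

Arguments Sviol {V K}.

(* Main.v *)
Require Import Defs.
From Stdlib Require Import List Relations Classical.
From mathcomp Require Import all_boot.

Section Proofs.
Variables (V : finType) (K : Type).

Definition uniqC (C : cset V K) (E' : eset V K) :=
  forall c, C c -> exists! e, c e /\ E' e.

Lemma cyclic_mono (A B : eset V K) : esubset A B -> cyclic A -> cyclic B.
Proof.
  intros Hs [t Ht]. exists t.
  assert (G : forall a b, clos_trans V (fun a b => exists e, A e /\ src e = a /\ dst e = b) a b ->
     clos_trans V (fun a b => exists e, B e /\ src e = a /\ dst e = b) a b).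
  { intros a b Hab. induction Hab as [a b [e [He [H1 H2]]]| a b c _ IH1 _ IH2].
    - apply t_step. exists e. auto.
    - eapply t_trans; eauto. }
  auto.
Qed.

Lemma elim_equiv (C : cset V K) cons e E' :
  C cons -> ~ E' e ->
  (uniqC C E' <-> uniqC (creplace C cons (eminus cons e)) E').
Proof.
  intros Hc He; split; intros HU c Hc'.
  - destruct Hc' as [[Hc1 _] | ->]; [now apply HU|].
    destruct (HU cons Hc) as [f [[Hf1 Hf2] Hu]].
    exists f. split.
    + split; [split|]; auto. intros ->; auto.
    + intros g [[Hg1 _] Hg2]. apply Hu; auto.
  - destruct (classic (c = cons)) as [-> | Hne].
    + destruct (HU (eminus cons e) (or_intror (erefl _))) as [f [[[Hf1 Hf3] Hf2] Hu]].
      exists f. split; auto.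
      intros g [Hg1 Hg2]. apply Hu. split; auto. split; auto.
      intros ->; auto.
    + apply HU. left; auto.
Qed.

Lemma intro_equiv (C : cset V K) e E' :
  E' e -> (uniqC C E' <-> uniqC (cremove C (esingle e)) E').
Proof.
  intros He; split; intros HU c Hc.
  - destruct Hc; auto.
  - destruct (classic (c = esingle e)) as [-> | Hne].
    + exists e. split. split; auto. reflexivity.
      intros g [Hg _]. symmetry; exact Hg.
    + apply HU. split; auto.
Qed.

Lemma step_ok (E : eset V K) (A B : cset V K) E2 A2 B2 :
  step (St E A B) (St E2 A2 B2) ->
  forall E', ~ cyclic E' ->
  (compatible E A B E' <-> compatible E2 A2 B2 E').
Proof.
  intros Hst E' Hac. inversion Hst; subst.
  -
    assert (Hne : forall (Hs : esubset E2 E')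
      (Hcl : forall x T' T U, E' (WRe x T' T) -> E' (WWe x T' U) -> E' (RWe x T U)),
      ~ E' (WWe x T T')).
    { intros Hs Hcl He. apply Hac. eapply cyclic_mono; [|eassumption].
      intros f [Hf | [Hf | [U [HU ->]]]]; auto.
      - rewrite Hf; auto.
      - apply Hcl with T; auto. }
    split.
    + intros [Hs [Hw [Hr Hcl]]]. split; [auto|split; [|auto]].
      apply (proj1 (elim_equiv A _ _ _ ltac:(eassumption) (Hne Hs Hcl))). exact Hw.
    + intros [Hs [Hw [Hr Hcl]]]. split; [auto|split; [|auto]].
      apply (proj2 (elim_equiv A _ _ _ ltac:(eassumption) (Hne Hs Hcl))). exact Hw.
  -
    assert (Hne : forall (Hs : esubset E2 E')
      (Hcl : forall x T' T U, E' (WRe x T' T) -> E' (WWe x T' U) -> E' (RWe x T U)),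
      ~ E' (WRe x T U)).
    { intros Hs Hcl He. apply Hac. eapply cyclic_mono; [|eassumption].
      intros f [Hf | [Hf | [T' [HT ->]]]]; auto.
      - rewrite Hf; auto.
      - apply Hcl with T; auto. }
    split.
    + intros [Hs [Hw [Hr Hcl]]]. split; [auto|split; [auto|split; [|auto]]].
      apply (proj1 (elim_equiv B _ _ _ ltac:(eassumption) (Hne Hs Hcl))). exact Hr.
    + intros [Hs [Hw [Hr Hcl]]]. split; [auto|split; [auto|split; [|auto]]].
      apply (proj2 (elim_equiv B _ _ _ ltac:(eassumption) (Hne Hs Hcl))). exact Hr.
  -
    split.
    + intros [Hs [Hw [Hr Hcl]]].
      assert (He : E' (WWe x T T')).
      { destruct (Hw _ ltac:(eassumption)) as [f [[Hf1 Hf2] _]]. rewrite <- Hf1; exact Hf2. }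
      split; [|split; [|split]]; auto.
      * intros f [Hf | [Hf | [U [HU ->]]]]; auto.
        -- rewrite Hf; auto.
        -- apply Hcl with T; auto.
      * apply (proj1 (intro_equiv A _ _ He)). exact Hw.
    + intros [Hs [Hw [Hr Hcl]]].
      assert (He : E' (WWe x T T')).
      { apply Hs. right. left. reflexivity. }
      split; [|split; [|split]]; auto.
      * intros f Hf. apply Hs. left; auto.
      * apply (proj2 (intro_equiv A _ _ He)). exact Hw.
  -
    split.
    + intros [Hs [Hw [Hr Hcl]]].
      assert (He : E' (WRe x T U)).
      { destruct (Hr _ ltac:(eassumption)) as [f [[Hf1 Hf2] _]]. rewrite <- Hf1; exact Hf2. }
      split; [|split; [|split]]; auto.
      * intros f [Hf | [Hf | [T' [HT ->]]]]; auto.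
        -- rewrite Hf; auto.
        -- apply Hcl with T; auto.
      * apply (proj1 (intro_equiv B _ _ He)). exact Hr.
    + intros [Hs [Hw [Hr Hcl]]].
      assert (He : E' (WRe x T U)).
      { apply Hs. right. left. reflexivity. }
      split; [|split; [|split]]; auto.
      * intros f Hf. apply Hs. left; auto.
      * apply (proj2 (intro_equiv B _ _ He)). exact Hr.
Qed.

Lemma step_viol (E : eset V K) (A B : cset V K) :
  step (St E A B) Sviol -> ~ SER_acyclic E A B.
Proof.
  intros Hst [E' [[Hs [Hw [Hr Hcl]]] Hac]]. inversion Hst; subst.
  - destruct H0 as [H0|H0].
    + destruct (Hw _ H0) as [f [[[] _] _]].
    + destruct (Hr _ H0) as [f [[[] _] _]].
  - apply Hac. eapply cyclic_mono; eauto.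
Qed.

Definition Inv (E0 : eset V K) (A0 B0 : cset V K) (s : state V K) : Prop :=
  match s with
  | St E A B => forall E', ~ cyclic E' ->
      (compatible E0 A0 B0 E' <-> compatible E A B E')
  | Sviol => ~ SER_acyclic E0 A0 B0
  end.

Lemma steps_inv E0 A0 B0 s t :
  steps s t -> Inv E0 A0 B0 s -> Inv E0 A0 B0 t.
Proof.
  intros Hst. induction Hst as [s t Hs| s | s u t _ IH1 _ IH2]; auto.
  destruct s as [E A B|]; [|inversion Hs].
  destruct t as [E2 A2 B2|]; simpl.
  - intros HI E' Hac. rewrite (HI E' Hac). apply (step_ok _ _ _ _ _ _ Hs); auto.
  - intros HI [E' [Hc Hac]]. apply (step_viol _ _ _ Hs).
    exists E'. split; auto. apply (HI E' Hac). auto.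
Qed.

End Proofs.

Theorem theoremE1 (V : finType) (K Val : Type) (H : history V K Val) :
  (forall (Ep : eset V K) (CWWp CWRp : cset V K),
      steps (St (init_E H) (init_CWW H) (init_CWR H)) (St Ep CWWp CWRp) ->
      (SER_acyclic (init_E H) (init_CWW H) (init_CWR H) <->
       SER_acyclic Ep CWWp CWRp)) /\
  (steps (St (init_E H) (init_CWW H) (init_CWR H)) Sviol ->
   ~ SER_acyclic (init_E H) (init_CWW H) (init_CWR H)).
Proof.
  assert (H0 : @Inv V K (init_E H) (init_CWW H) (init_CWR H)
                 (St (init_E H) (init_CWW H) (init_CWR H))).
  { simpl. intros; tauto. }
  split.
  - intros Ep A B Hst. pose proof (steps_inv _ _ _ _ _ _ _ Hst H0) as HI. simpl in HI.
    split; intros [E' [Hc Hac]]; exists E'; split; auto; apply (HI E' Hac); auto.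
  - intros Hst. exact (steps_inv _ _ _ _ _ _ _ Hst H0).
Qed.
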